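(* Let $D$ be a $3$-dicritical digraph and $uv$ an arc of $D$. Then $D$ admits a $uv$-colouring.
   Context: A $2$-dicolouring of a digraph is a map to $\{1,2\}$ such that each colour class induces an acyclic subdigraph (digons count as directed cycles). $D$ is $3$-dicritical if $D$ has no $2$-dicolouring but every proper subdigraph has one. For an arc $uv$ of $D$, a $uv$-colouring of $D$ is a map $\phi:V(D)\to\{1,2\}$ such that: $\phi$ is a $2$-dicolouring of $D\setminus uv$ (the digraph $D$ with the arc $uv$ deleted); $\phi(u)=\phi(v)=1$; and $D\setminus uv$ contains no directed path from $u$ to $v$ all of whose vertices have the same colour under $\phi$. *)

(* Defs.v *)
(* A digraph is a finite vertex type T with an arc relation
   A : rel T (no parallel arcs; loops excluded by hypothesis in the theorem;
   digons x->y->x allowed). *)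
From mathcomp Require Import all_boot.
Set Implicit Arguments. Unset Strict Implicit. Unset Printing Implicit Defensive.

(* X induces an acyclic subdigraph of (.., B): no directed cycle (closed
   directed walk with at least one arc) all of whose vertices lie in X. *)
Definition acyclic_in (T : finType) (B : rel T) (X : pred T) : Prop :=
  ~ exists (x : T) (p : seq T),
      [/\ p != [::], path B x p, last x p = x & all X (x :: p)].

Definition dicol2 (T : finType) (S : {set T}) (B : rel T) (phi : T -> nat) : Prop :=
  (forall x, x \in S -> phi x = 1 \/ phi x = 2) /\
  (forall c : nat, acyclic_in B [pred x | (x \in S) && (phi x == c)]).

Definition proper_subdigraph (T : finType) (A : rel T) (S : {set T}) (B : rel T) : Prop :=
  (forall x y, B x y -> [/\ A x y, x \in S & y \in S]) /\
  (S != [set: T] \/ exists x y, A x y /\ ~~ B x y).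

Definition dicritical3 (T : finType) (A : rel T) : Prop :=
  (~ exists phi, dicol2 [set: T] A phi) /\
  (forall S B, proper_subdigraph A S B -> exists phi, dicol2 S B phi).

Definition del_arc (T : finType) (A : rel T) (u v : T) : rel T :=
  fun x y => A x y && ~~ ((x == u) && (y == v)).

Definition uv_colouring (T : finType) (A : rel T) (u v : T) (phi : T -> nat) : Prop :=
  [/\ dicol2 [set: T] (del_arc A u v) phi, phi u = 1, phi v = 1 &
      ~ exists p : seq T,
          [/\ path (del_arc A u v) u p, last u p = v &
              all (fun x => phi x == phi u) (u :: p)]].

(* Main.v *)
Require Import Defs.
From mathcomp Require Import all_boot.

Definition rplus {T : finType} (B : rel T) (X : pred T) x y :=
  exists q, [/\ q != [::], path B x q, last x q = y & all X (x :: q)].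

Lemma lift_path {T : finType} {A B : rel T} {X : pred T} :
  (forall x y, A x y -> X x -> X y -> rplus B X x y) ->
  forall p x, path A x p -> all X (x :: p) ->
  exists q, [/\ path B x q, last x q = last x p, all X (x :: q) &
                (p != [::] -> q != [::])].
Proof.
move=> H; elim=> [|y p IH] x /=.
  by move=> _ Xx; exists [::]; split.
case/andP=> Axy Hp /andP[Xx /andP[Xy Hall]].
have [q1 [nq1 pq1 lq1 aq1]] := H x y Axy Xx Xy.
have [q2 [pq2 lq2 aq2 _]] := IH y Hp (introT andP (conj Xy Hall)).
exists (q1 ++ q2); split.
- by rewrite cat_path pq1 lq1 pq2.
- by rewrite last_cat lq1 lq2.
- move: aq1 aq2 => /= /andP[-> a1] /andP[_ a2]; by rewrite all_cat a1 a2.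
- by move=> _; case: q1 nq1 {pq1 lq1 aq1}.
Qed.

Lemma acyc_lift {T : finType} {A B : rel T} {X : pred T} :
  (forall x y, A x y -> X x -> X y -> rplus B X x y) ->
  acyclic_in B X -> acyclic_in A X.
Proof.
move=> H hB [x [p [np pp lp ap]]]; apply: hB.
have [q [pq lq aq nq]] := lift_path H p x pp ap.
exists x, q; split => //; [exact: nq | by rewrite lq].
Qed.

Lemma acyc_sub {T : finType} {B : rel T} {X Y : pred T} :
  (forall x, Y x -> X x) -> acyclic_in B X -> acyclic_in B Y.
Proof.
move=> H hX [x [p [np pp lp ap]]]; apply: hX; exists x, p; split => //.
exact: sub_all ap.
Qed.

Theorem lemma13 (T : finType) (A : rel T) (hloop : irreflexive A)
    (hD : dicritical3 A) (u v : T) (huv : A u v) :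
  exists phi : T -> nat, uv_colouring A u v phi.
Proof.
have hprop : proper_subdigraph A [set: T] (del_arc A u v).
  split.
    by move=> x y /andP[Axy _]; split; rewrite ?in_setT.
  by right; exists u, v; split => //; rewrite /del_arc !eqxx andbF.
have [phi [hcol hacyc]] := hD.2 _ _ hprop.
have h12 x : phi x = 1 \/ phi x = 2 := hcol x (in_setT x).
have nuv : u != v by apply/eqP => e; by rewrite e hloop in huv.
have single : forall c x y, del_arc A u v x y ->
   [pred x | (x \in [set: T]) && (phi x == c)] x ->
   [pred x | (x \in [set: T]) && (phi x == c)] y ->
   rplus (del_arc A u v) [pred x | (x \in [set: T]) && (phi x == c)] x y.
  move=> c x y dxy Xx Xy; exists [:: y]; split => //=.
    by rewrite dxy.
  by move: Xx Xy => /= -> ->.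
have key : phi u = phi v /\ ~ exists p, [/\ path (del_arc A u v) u p,
     last u p = v & all (fun x => phi x == phi u) (u :: p)].
  case: (eqVneq (phi u) (phi v)) => [euv|neuv]; last first.
    exfalso; apply: hD.1; exists phi; split => // c.
    apply: acyc_lift (hacyc c) => x y Axy Xx Xy.
    apply: single => //; rewrite /del_arc Axy /=.
    case: (eqVneq x u) => [ex|] //=; case: (eqVneq y v) => [ey|] //=.
    subst x y; move: Xx Xy => /= /andP[_ /eqP e1] /andP[_ /eqP e2].
    by move: neuv; rewrite e1 e2 eqxx.
  split => //; move=> [p [pp lp ap]].
  apply: hD.1; exists phi; split => // c.
  apply: acyc_lift (hacyc c) => x y Axy Xx Xy.
  case: (boolP ((x == u) && (y == v))) => [/andP[/eqP ex /eqP ey]|nxy].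
    subst x y; exists p; split => //.
      by case: p pp lp ap => // _ /= e; move: nuv; rewrite e eqxx.
    apply/allP => z zin; have := allP ap z zin => /= /eqP ->.
    by move: Xx => /= /andP[_ ->]; rewrite in_setT.
  by apply: single => //; rewrite /del_arc Axy nxy.
case: key => ephi npath.
case: (h12 u) => hu.
  by exists phi; split; [split | | rewrite -ephi |].
pose psi := fun x => if phi x == 1 then 2 else 1.
exists psi; split.
- split; first by move=> x _; rewrite /psi; case: (phi x == 1); auto.
  move=> c; apply: acyc_sub (hacyc (3 - c)).
  move=> x /= /andP[_ hx]; rewrite in_setT /=.
  by case: (h12 x) hx => e; rewrite /psi e /= => /eqP <-.
- by rewrite /psi hu.
- by rewrite /psi -ephi hu.
- move=> [p [pp lp ap]]; apply: npath; exists p; split => //.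
  apply/allP => z zin; have := allP ap z zin; rewrite /psi hu /=.
  by case: (h12 z) => ->.
Qed.
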